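(* Let $\mathcal O$ be a polycube with orthogonally convex layers, and let $1\le i\le m$. Every nonempty beam lying on the surface of the layer $\mathcal O_i$ (i.e., every nonempty top $i$-beam lying on top of $\mathcal O_i$ and every nonempty bottom $(i-1)$-beam lying on the bottom of $\mathcal O_i$) has at least one of its two anchors on the $i$-band.
   Context: A polycube $\mathcal O$ is an orthogonal polyhedron homeomorphic to a sphere formed as a union of unit cubes glued along entire faces; its surface is subdivided into unit squares called cells. Let $z_0<\dots<z_m$ be the distinct $z$-coordinates of vertices of $\mathcal O$; the $i$-plane is $z=z_i$. The layer $\mathcal O_i$ is the part of $\mathcal O$ between the $(i-1)$-plane and the $i$-plane. $\mathcal O$ has orthogonally convex layers if each $\mathcal O_i$ meets every line parallel to a coordinate axis in a single segment or not at all. The $i$-band is the set of vertical surface cells between the $(i-1)$-plane and the $i$-plane (the lateral boundary of $\mathcal O_i$). A face is a maximal edge-connected set of coplanar cells; an $i$-face is a face in the $i$-plane; it lies either on top of $\mathcal O_i$ (a top face) or on the bottom of $\mathcal O_{i+1}$ (a bottom face). Two surface pieces are adjacent if their boundaries share a cell edge. Cells are parallel if they lie in parallel planes. Beams: if a band cell $a$ (on the $i$-band or the $(i+1)$-band) has its horizontal edge $e$ lying in the $i$-plane adjacent to an $i$-face, then $i$-beam$(a)$ is the portion of that $i$-face illuminated by rays emitted from $e$ in the horizontal direction orthogonal to $a$; otherwise $i$-beam$(a)$ is empty. A nonempty $i$-beam$(a)$ has two anchors: $a$ and the band cell $b$ parallel to $a$ and adjacent to the beam at its other end ($b$ lies on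 the $i$-band or on the $(i+1)$-band); $i$-beam$(a)$ and $i$-beam$(b)$ coincide. *)

(* Defs.v *)
From HB Require Import structures.
From mathcomp Require Import all_boot all_order all_algebra.
From mathcomp Require Import boolp classical_sets topology.
From mathcomp Require Import Rstruct Rstruct_topology.
From Stdlib Require Rdefinitions.

Set Implicit Arguments.
Unset Strict Implicit.
Unset Printing Implicit Defensive.
Import Order.TTheory GRing.Theory Num.Theory.
Local Open Scope ring_scope.
Local Open Scope classical_set_scope.

(* A set of unit cubes: [C x y z] means the closed cube                     *)
(* [x,x+1] x [y,y+1] x [z,z+1] belongs to the polycube.                      *)
Definition cubes := int -> int -> int -> bool.

Definition point := (Rdefinitions.R * Rdefinitions.R * Rdefinitions.R)%type.

Definition in_cube (x y z : int) (p : point) : Prop :=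
  [/\ x%:~R <= p.1.1 <= (x + 1)%:~R,
      y%:~R <= p.1.2 <= (y + 1)%:~R &
      z%:~R <= p.2 <= (z + 1)%:~R].

Definition solid (C : cubes) : set point :=
  [set p | exists x y z, C x y z /\ in_cube x y z p].

Definition surface (C : cubes) : set point :=
  closure (solid C) `\` interior (solid C).

Definition unit_sphere : set point :=
  [set p | p.1.1 ^+ 2 + p.1.2 ^+ 2 + p.2 ^+ 2 = 1].

Definition homeomorphic (A B : set point) : Prop :=
  exists (f g : point -> point),
    [/\ {within A, continuous f}, {within B, continuous g},
        (forall p, A p -> B (f p) /\ g (f p) = p) &
        (forall q, B q -> A (g q) /\ f (g q) = q)].

Definition face_adj (c d : int * int * int) : bool :=
  [|| (c.1.1 == d.1.1 + 1) && (c.1.2 == d.1.2) && (c.2 == d.2),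
      (d.1.1 == c.1.1 + 1) && (c.1.2 == d.1.2) && (c.2 == d.2),
      (c.1.1 == d.1.1) && (c.1.2 == d.1.2 + 1) && (c.2 == d.2),
      (c.1.1 == d.1.1) && (d.1.2 == c.1.2 + 1) && (c.2 == d.2),
      (c.1.1 == d.1.1) && (c.1.2 == d.1.2) && (c.2 == d.2 + 1) |
      (c.1.1 == d.1.1) && (c.1.2 == d.1.2) && (d.2 == c.2 + 1)].

Definition inC (C : cubes) (c : int * int * int) : bool := C c.1.1 c.1.2 c.2.

Definition polycube (C : cubes) : Prop :=
  [/\ (exists s : seq (int * int * int),
         forall x y z, C x y z -> (x, y, z) \in s),
      (exists x y z, C x y z),
      (forall c d, inC C c -> inC C d ->
         exists p : seq (int * int * int),
           [/\ path face_adj c p, last c p = d & all (inC C) p]) &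
      homeomorphic unit_sphere (surface C)].

(* Planes and layers.  A z-coordinate h is that of a vertex of O iff there   *)
(* is a horizontal surface cell in the plane z = h.                          *)
Definition is_level (C : cubes) (h : int) : Prop :=
  exists x y, C x y (h - 1) != C x y h.

(* lo = z_(i-1) and hi = z_i for some 1 <= i <= m *)
Definition consecutive_levels (C : cubes) (lo hi : int) : Prop :=
  [/\ is_level C lo, is_level C hi, lo < hi &
      forall h, lo < h < hi -> ~ is_level C h].

Definition layer (C : cubes) (lo hi : int) : set point :=
  [set p | exists x y z, [/\ C x y z, lo <= z < hi & in_cube x y z p]].

Definition orth_convex (A : set point) : Prop :=
  [/\ (forall (y z x1 x2 x3 : Rdefinitions.R), x1 <= x2 <= x3 ->
         A (x1, y, z) -> A (x3, y, z) -> A (x2, y, z)),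
      (forall (x z y1 y2 y3 : Rdefinitions.R), y1 <= y2 <= y3 ->
         A (x, y1, z) -> A (x, y3, z) -> A (x, y2, z)) &
      (forall (x y z1 z2 z3 : Rdefinitions.R), z1 <= z2 <= z3 ->
         A (x, y, z1) -> A (x, y, z3) -> A (x, y, z2))].

Definition orth_convex_layers (C : cubes) : Prop :=
  forall lo hi, consecutive_levels C lo hi -> orth_convex (layer C lo hi).

(* Vertical cells: [VCell AX u v zc] is the unit square in the plane x = u,   *)
(* spanning y in [v,v+1], z in [zc,zc+1];  [VCell AY u v zc] is the unit      *)
(* square in the plane y = u spanning x in [v,v+1], z in [zc,zc+1].           *)
Inductive axis := AX | AY.

Record vcell := VCell { vax : axis; vu : int; vv : int; vz : int }.

(* cube membership in coordinates (u = normal coord, v = tangent coord) *)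
Definition Cax (C : cubes) (ax : axis) (u v z : int) : bool :=
  match ax with AX => C u v z | AY => C v u z end.

Definition vsurf (C : cubes) (a : vcell) : bool :=
  Cax C (vax a) (vu a - 1) (vv a) (vz a) != Cax C (vax a) (vu a) (vv a) (vz a).

(* horizontal cells of the plane z = h are indexed by (x,y): the square
   [x,x+1] x [y,y+1] x {h}. *)
Definition hpos (ax : axis) (u v : int) : int * int :=
  match ax with AX => (u, v) | AY => (v, u) end.

(* horizontal surface cell in plane z = h; t = true: top cell (cube below in O,
   lying on top of a layer), t = false: bottom cell (cube above in O) *)
Definition hsurf (C : cubes) (h : int) (t : bool) (c : int * int) : bool :=
  if t then C c.1 c.2 (h - 1) && ~~ C c.1 c.2 h
  else ~~ C c.1 c.2 (h - 1) && C c.1 c.2 h.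

Definition edge_adj (c d : int * int) : bool :=
  [|| (c.1 == d.1 + 1) && (c.2 == d.2), (d.1 == c.1 + 1) && (c.2 == d.2),
      (c.1 == d.1) && (c.2 == d.2 + 1) | (c.1 == d.1) && (d.2 == c.2 + 1)].

Definition same_face (C : cubes) (h : int) (t : bool) (c d : int * int) : Prop :=
  hsurf C h t c /\
  exists p : seq (int * int),
    [/\ path edge_adj c p, last c p = d & all (hsurf C h t) p].

Definition on_band (lo hi : int) (a : vcell) : Prop := lo <= vz a < hi.

(* [beam C h t a d k b]: a is a band cell (on the band just below or just
   above the plane z = h) whose horizontal edge e in the plane z = h is
   adjacent to a face of kind t of that plane, lying on the side d of a
   (d = true: towards increasing normal coordinate);  the h-beam(a) is the
   run of the k >= 1 cells of that face met by the rays from e orthogonal to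
   a, and b is the band cell parallel to a adjacent to the beam at its other
   end (so b is the second anchor). *)
Definition beam (C : cubes) (h : int) (t : bool) (a : vcell) (d : bool)
    (k : nat) (b : vcell) : Prop :=
  let step : int := if d then 1 else -1 in
  let s : int := if d then vu a else vu a - 1 in
  let cell (j : int) := hpos (vax a) (s + j * step) (vv a) in
  [/\ vsurf C a, vz a = h - 1 \/ vz a = h & hsurf C h t (cell 0)] /\
  [/\ (0 < k)%N,
      (forall j : nat, (j < k)%N -> same_face C h t (cell 0) (cell j%:Z)) &
      ~ same_face C h t (cell 0) (cell k%:Z)] /\
  [/\ vax b = vax a, vv b = vv a, vu b = vu a + k%:Z * step,
      vz b = h - 1 \/ vz b = h & vsurf C b].

(* Main.v *)
Require Import Defs.
From HB Require Import structures.
From mathcomp Require Import all_boot all_order all_algebra.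
From mathcomp Require Import boolp classical_sets topology.
From mathcomp Require Import Rstruct Rstruct_topology.
From mathcomp Require Import zify ring lra.
Import Order.TTheory GRing.Theory Num.Theory.
Local Open Scope ring_scope.
Set Implicit Arguments.

Lemma half_int (x x' : int) :
  x%:~R <= (x'%:~R + 1/2 : Rdefinitions.R) <= (x + 1)%:~R -> x = x'.
Proof.
move=> /andP[h1 h2].
have a : x%:~R < (x' + 1)%:~R :> Rdefinitions.R.
  rewrite intrD; apply: (le_lt_trans h1); rewrite ltrD2l; lra.
have b : x'%:~R < (x + 1)%:~R :> Rdefinitions.R.
  apply: (lt_le_trans _ h2); rewrite -[X in X < _]addr0 ltrD2l; lra.
rewrite ltr_int in a; rewrite ltr_int in b; lia.
Qed.

Lemma half_in (x : int) :
  x%:~R <= (x%:~R + 1/2 : Rdefinitions.R) <= (x + 1)%:~R.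
Proof. rewrite intrD; apply/andP; split; lra. Qed.

Definition hp (x : int) : Rdefinitions.R := x%:~R + 1/2.

Lemma in_layer (C : cubes) (L H x y z : int) : C x y z -> L <= z < H ->
  layer C L H (hp x, hp y, hp z).
Proof. move=> Hc Hz; exists x, y, z; split=> //; split; exact: half_in. Qed.

Lemma layer_in (C : cubes) (L H x y z : int) : layer C L H (hp x, hp y, hp z) -> C x y z.
Proof.
move=> [x' [y' [z' [Hc _ [/half_int e1 /half_int e2 /half_int e3]]]]].
by subst.
Qed.

Lemma hp_le (p r : int) : p <= r -> hp p <= hp r.
Proof. by move=> h; rewrite /hp lerD2r ler_int. Qed.

Lemma line_conv (C : cubes) (L H : int) (ax : axis) (v z p q r : int) : consecutive_levels C L H ->
  orth_convex_layers C -> L <= z < H ->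
  Cax C ax p v z -> Cax C ax q v z -> p <= r <= q -> Cax C ax r v z.
Proof.
move=> Hcl Hoc Hz Hp Hq /andP[pr rq].
have [c1 c2 _] := Hoc _ _ Hcl.
case: ax Hp Hq => /= Hp Hq.
- apply: (@layer_in C L H).
  apply: (c1 (hp v) (hp z) (hp p) (hp r) (hp q)).
  + by rewrite !hp_le.
  + exact: in_layer.
  + exact: in_layer.
- apply: (@layer_in C L H).
  apply: (c2 (hp v) (hp z) (hp p) (hp r) (hp q)).
  + by rewrite !hp_le.
  + exact: in_layer.
  + exact: in_layer.
Qed.
Lemma seq_bound (s : seq (int * int * int)) :
  exists B : int, forall c, c \in s -> -B < c.2 < B.
Proof.
elim: s => [|[[c1 c2] c3] s [B HB]]; first by exists 0.
exists (`|c3| + `|B| + 1) => c'; rewrite inE => /orP[/eqP->|/HB] /=.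
  have h1 : c3 <= `|c3| := ler_norm _.
  have h2 : - c3 <= `|c3| by rewrite -normrN ler_norm.
  have h3 : 0 <= `|B| := normr_ge0 _.
  move: h1 h2 h3; set w := `|c3|; set w2 := `|B|; move=> h1 h2 h3. lia.
have h1 : B <= `|B| := ler_norm _.
have h3 : 0 <= `|c3| := normr_ge0 _.
move: h1 h3; set w := `|c3|; set w2 := `|B|; move=> h1 h3 /andP[].
case: c' => [[? ?] z] /=. lia.
Qed.

Lemma zbound (C : cubes) : polycube C ->
  exists B : int, forall x y z, C x y z -> -B < z < B.
Proof.
move=> [[s Hs] _ _ _]; have [B HB] := seq_bound s.
by exists B => x y z /Hs /HB.
Qed.

Lemma level_above (C : cubes) (h x y : int) : polycube C -> C x y h ->
  exists h', h < h' /\ is_level C h'.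
Proof.
move=> /zbound [B HB].
suff: forall n : nat, forall z, B - z <= n%:Z -> h <= z -> C x y z ->
  exists h', h < h' /\ is_level C h'.
  move=> /(_ `|B - h|%N h) H Hc; apply: H => //.
  have := HB _ _ _ Hc; lia.
elim=> [|n IH] z Hn Hz Hc.
  have := HB _ _ _ Hc; lia.
case Hc1: (C x y (z + 1)).
  apply: (IH (z+1)) => //; lia.
exists (z + 1); split; first lia.
by exists x, y; rewrite addrK Hc Hc1.
Qed.

Lemma level_below (C : cubes) (h x y : int) : polycube C -> C x y (h - 1) ->
  exists h', h' < h /\ is_level C h'.
Proof.
move=> /zbound [B HB].
suff: forall n : nat, forall z, z + B <= n%:Z -> z <= h - 1 -> C x y z ->
  exists h', h' < h /\ is_level C h'.
  move=> /(_ (absz (h - 1 + B)) (h - 1)) H Hc; apply: H => //.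
  have := HB _ _ _ Hc; lia.
elim=> [|n IH] z Hn Hz Hc.
  have := HB _ _ _ Hc; lia.
case Hc1: (C x y (z - 1)).
  apply: (IH (z-1)) => //; lia.
exists z; split; first lia.
by exists x, y; rewrite Hc Hc1.
Qed.

Lemma next_level (C : cubes) (h h0 : int) : is_level C h -> h < h0 ->
  is_level C h0 -> exists H, consecutive_levels C h H.
Proof.
move=> Hh.
suff: forall n : nat, forall h1, h1 - h <= n%:Z -> h < h1 -> is_level C h1 ->
  exists H, consecutive_levels C h H.
  by move=> /(_ `|h0 - h|%N h0) H Hlt; apply: H => //; lia.
elim=> [|n IH] h1 Hn Hlt Hl; first lia.
case: (pselect (exists h2, h < h2 < h1 /\ is_level C h2)).
  move=> [h2 [/andP[a b] Hl2]]; apply: (IH h2) => //; lia.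
move=> Hno; exists h1; split=> // h2 Hr Hl2; apply: Hno; by exists h2.
Qed.

Lemma prev_level (C : cubes) (h h0 : int) : is_level C h -> h0 < h ->
  is_level C h0 -> exists L, consecutive_levels C L h.
Proof.
move=> Hh.
suff: forall n : nat, forall h1, h - h1 <= n%:Z -> h1 < h -> is_level C h1 ->
  exists L, consecutive_levels C L h.
  by move=> /(_ `|h - h0|%N h0) H Hlt; apply: H => //; lia.
elim=> [|n IH] h1 Hn Hlt Hl; first lia.
case: (pselect (exists h2, h1 < h2 < h /\ is_level C h2)).
  move=> [h2 [/andP[a b] Hl2]]; apply: (IH h2) => //; lia.
move=> Hno; exists h1; split=> // h2 Hr Hl2; apply: Hno; by exists h2.
Qed.

Lemma hsurfE (C : cubes) h t ax w v :
  hsurf C h t (hpos ax w v) =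
  if t then Cax C ax w v (h-1) && ~~ Cax C ax w v h
  else ~~ Cax C ax w v (h-1) && Cax C ax w v h.
Proof. by case: ax; case: t. Qed.

Lemma neqF (x : bool) : x != false -> x. Proof. by case: x. Qed.
Lemma Fneq (x : bool) : false != x -> x. Proof. by case: x. Qed.

Lemma neq_or (x y : bool) : x != y -> x || y.
Proof. by case: x; case: y. Qed.

Lemma Cax_ex (C : cubes) ax p v z : Cax C ax p v z -> exists x y, C x y z.
Proof. by case: ax => /= H; [exists p, v | exists v, p]. Qed.

Lemma ltn_predL (k : nat) : (0 < k)%N -> (k.-1 < k)%N.
Proof. by case: k. Qed.

Lemma same_face_hs (C : cubes) h t c d : same_face C h t c d -> hsurf C h t d.
Proof.
move=> [Hc [p [_ <- Hall]]]; elim: p c Hc Hall => //= e p IH c _ /andP[He Hall].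
exact: IH.
Qed.

Lemma core (C : cubes) ax (u v z : int) (k : nat) (d : bool) :
  (0 < k)%N ->
  ~~ Cax C ax ((if d then u else u - 1) + 0 * (if d then 1 else -1)) v z ->
  Cax C ax (u - 1) v z != Cax C ax u v z ->
  ~~ Cax C ax ((if d then u else u - 1) + (k.-1)%:Z * (if d then 1 else -1)) v z ->
  Cax C ax (u + k%:Z * (if d then 1 else -1) - 1) v z !=
    Cax C ax (u + k%:Z * (if d then 1 else -1)) v z ->
  (forall p q r, Cax C ax p v z -> Cax C ax q v z -> p <= r <= q -> Cax C ax r v z) ->
  False.
Proof.
move=> Hk; case: d => /=; rewrite mul0r addr0.
- move=> /negbTE H0; rewrite H0 => /neqF Ha.
  rewrite mulr1 (_ : u + (k.-1)%:Z = u + k%:Z - 1); last by lia.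
  move=> /negbTE Hc; rewrite mulr1 Hc => /Fneq Hb Hconv.
  suff: Cax C ax u v z by rewrite H0.
  apply: (Hconv _ _ _ Ha Hb); apply/andP; split; lia.
- move=> /negbTE H0; rewrite H0 => /Fneq Ha.
  rewrite (_ : u - 1 + (k.-1)%:Z * -1 = u + k%:Z * -1); last by lia.
  move=> /negbTE Hc; rewrite Hc => /neqF Hb Hconv.
  suff: Cax C ax (u - 1) v z by rewrite H0.
  apply: (Hconv _ _ _ Hb Ha); apply/andP; split; lia.
Qed.

Unset Implicit Arguments.

Theorem lemma3 (C : cubes) (lo hi : int) :
  polycube C -> orth_convex_layers C -> consecutive_levels C lo hi ->
  forall (a b : vcell) (d : bool) (k : nat),
    (beam C hi true a d k b -> on_band lo hi a \/ on_band lo hi b) /\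
    (beam C lo false a d k b -> on_band lo hi a \/ on_band lo hi b).
Proof.
move=> HP Hoc Hcl a b d k.
have [Hllo Hlhi Hlt _] := Hcl.
split; rewrite /beam => -[[Hva Hza H0] [[Hk Hface Hnf] [Hbax Hbv Hbu Hzb Hvb]]].
- case: Hza => Hza; first by left; rewrite /on_band Hza; apply/andP; split; lia.
  case: Hzb => Hzb; first by right; rewrite /on_band Hzb; apply/andP; split; lia.
  exfalso.
  move: Hva Hvb; rewrite /vsurf Hbax Hbv Hbu Hza Hzb => Hva Hvb.
  have Hc := same_face_hs (Hface k.-1 (@ltn_predL k Hk)).
  move: H0 Hc; rewrite !hsurfE => /andP[_ H0] /andP[_ Hc].
  have [x [y Hxy]] : exists x y, C x y hi.
    by by move: Hva => /neq_or/orP[]; apply: Cax_ex.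
  have [h0 [Hh0 Hl0]] := @level_above C hi x y HP Hxy.
  have [H HH] := next_level Hlhi Hh0 Hl0.
  have HHlt : hi < H by case: HH.
  apply: (@core _ _ _ _ _ _ _ Hk H0 Hva Hc Hvb) => p q r.
  apply: (@line_conv _ _ _ _ _ _ _ _ _ HH Hoc); apply/andP; split; lia.
- case: Hza => Hza; last by left; rewrite /on_band Hza; apply/andP; split; lia.
  case: Hzb => Hzb; last by right; rewrite /on_band Hzb; apply/andP; split; lia.
  exfalso.
  move: Hva Hvb; rewrite /vsurf Hbax Hbv Hbu Hza Hzb => Hva Hvb.
  have Hc := same_face_hs (Hface k.-1 (@ltn_predL k Hk)).
  move: H0 Hc; rewrite !hsurfE => /andP[H0 _] /andP[Hc _].
  have [x [y Hxy]] : exists x y, C x y (lo - 1).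
    by by move: Hva => /neq_or/orP[]; apply: Cax_ex.
  have [h0 [Hh0 Hl0]] := @level_below C lo x y HP Hxy.
  have [L HL] := prev_level Hllo Hh0 Hl0.
  have HLlt : L < lo by case: HL.
  apply: (@core _ _ _ _ _ _ _ Hk H0 Hva Hc Hvb) => p q r.
  apply: (@line_conv _ _ _ _ _ _ _ _ _ HL Hoc); apply/andP; split; lia.
Qed.
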